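(* The finite element scheme ''Find $u_h\in V_h$ such that $\int_a^b \mathcal{D}\, u_h^\prime v_h^\prime\,\mathrm{d}x =\int_a^b f v_h\,\mathrm{d}x$ for all $v_h\in V_h$'', in the limit $\beta\to 0$ (i.e. for $\beta=0$), is equivalent to the Babuška-Zlámal DG method: Find $u_h\in V_h^D$ such that \begin{equation} \sum_{i=0}^{N}\int_{I_i} u_h^\prime v_h^\prime\,\mathrm{d}x + D\sum_{i=0}^{N+1}[u_h]_{x_i}[v_h]_{x_i}= \int_a^b fv_h\,\mathrm{d}x,\quad \forall v_h\in V_h^D. \end{equation}
   Context: Consider the 1D Poisson problem $-u''=f$ on $(a,b)$ with zero Dirichlet boundary conditions. Take mesh nodes $a=x_0<x_1<\ldots<x_{N+1}=b$ and the discontinuous piecewise linear space $V_h^D=\{v\in L^2([a,b]): v|_{I_i}\in\mathbb{P}_1(I_i),\ i=0,\ldots,N\}$ with $I_i=[x_i,x_{i+1}]$. For $v_h\in V_h^D$ the jump at an interior node is $[v_h]_{x_i}=v_h(x_i^+)-v_h(x_i^-)$, and at the endpoints $[v_h]_{x_0}=v_h(x_0^+)$, $[v_h]_{x_{N+1}}=-v_h(x_{N+1}^-)$. The mesh is enriched with auxiliary nodes $y_i$: $a=y_0<x_0<y_1<x_1<\ldots<y_{N+1}<x_{N+1}=b$, giving intervals $I_i=[x_i,y_{i+1}]$ and small intervals $J_i=[y_i,x_i]$ of length $|J_i|=\beta$ for all $i=0,\dots,N+1$. $V_h$ is the space of continuous piecewise linear functions on this enriched mesh (linear on each $I_i$ and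 each $J_i$) vanishing at $a$ and $b$. The modified diffusion coefficient is $\mathcal{D}(x)=1$ on the $I_i$ and $\mathcal{D}(x)=\beta D$ on the $J_i$, with a constant $D>0$. As $\beta\to 0$ (each $J_i$ collapses to the point $x_i$), values are identified via $u_h(y_i)=u_h(x_i^-)$, $u_h(x_i)=u_h(x_i^+)$, so that every $v_h\in V_h$ is identified with a limiting $v_h\in V_h^D$, and $v_h(x_i)-v_h(y_i)\to[v_h]_{x_i}$. *)

(* Defs.v *)
From HB Require Import structures.
From mathcomp Require Import all_boot all_order all_algebra.
From mathcomp Require Import all_classical all_reals all_analysis.
Set Implicit Arguments. Unset Strict Implicit. Unset Printing Implicit Defensive.
Import Order.TTheory GRing.Theory Num.Theory.
Import numFieldNormedType.Exports.
Local Open Scope classical_set_scope.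
Local Open Scope ring_scope.

Section Defs.
Variable R : realType.

Definition lin (p q l r t : R) : R := l + (r - l) * (t - p) / (q - p).

(* piecewise linear function on the mesh p 0 < p 1 < ... < p M, where on the
   k-th cell [p k, p k.+1) it is the affine function with endpoint values
   l k (at p k^+) and r k (at p k.+1^-).  (Values at the single points
   p M and outside [p 0, p M] are 0; irrelevant for integrals.) *)
Definition pw_lin (p : nat -> R) (M : nat) (l r : nat -> R) (t : R) : R :=
  \sum_(k < M) (if (p k <= t < p k.+1) then lin (p k) (p k.+1) (l k) (r k) t else 0).

Definition pw_slope (p : nat -> R) (M : nat) (l r : nat -> R) (t : R) : R :=
  \sum_(k < M) (if (p k <= t < p k.+1) then (r k - l k) / (p k.+1 - p k) else 0).

(* ---------- The DG space V_h^D on the original mesh x 0 < ... < x N.+1 ----------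
   An element v_h of V_h^D is given by L i = v_h(x_i^+) and Rt i = v_h(x_{i+1}^-),
   i = 0..N (its values at the two ends of I_i = [x_i, x_{i+1}]). *)
Definition dg_fun (x : nat -> R) (N : nat) (L Rt : nat -> R) : R -> R :=
  pw_lin x N.+1 L Rt.
Definition dg_deriv (x : nat -> R) (N : nat) (L Rt : nat -> R) : R -> R :=
  pw_slope x N.+1 L Rt.

Definition jump (N : nat) (L Rt : nat -> R) (i : nat) : R :=
  if i == 0%N then L 0%N
  else if i == N.+1 then - Rt N
  else L i - Rt i.-1.

Definition dg_a (x : nat -> R) (N : nat) (D : R) (uL uR vL vR : nat -> R) : R :=
  \sum_(i < N.+1)
     (\int[lebesgue_measure]_(t in `[x i, x i.+1]) (dg_deriv x N uL uR t * dg_deriv x N vL vR t))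
  + D * \sum_(i < N.+2) (jump N uL uR i * jump N vL vR i).

Definition dg_l (x : nat -> R) (N : nat) (f : R -> R) (vL vR : nat -> R) : R :=
  \int[lebesgue_measure]_(t in `[x 0%N, x N.+1]) (f t * dg_fun x N vL vR t).

Definition dg_solution (x : nat -> R) (N : nat) (D : R) (f : R -> R) (uL uR : nat -> R) : Prop :=
  forall vL vR : nat -> R, dg_a x N D uL uR vL vR = dg_l x N f vL vR.

(* ---------- The enriched mesh, for parameter beta > 0 ----------
   a = y_0 < x_0 < y_1 < x_1 < ... < y_{N+1} < x_{N+1} = b, |J_i| = x_i - y_i = beta.
   Convention: the node x_0 is moved to a + beta, the nodes x_i (i >= 1) are kept,
   and y_i := x_i - beta (so y_0 = a).  *)
Definition xb (x : nat -> R) (beta : R) (i : nat) : R :=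
  if i == 0%N then x 0%N + beta else x i.
Definition yb (x : nat -> R) (beta : R) (i : nat) : R := xb x beta i - beta.

(* enriched nodes z 0 = y_0, z 1 = x_0, z 2 = y_1, ..., z (2i) = y_i, z (2i+1) = x_i *)
Definition zb (x : nat -> R) (beta : R) (k : nat) : R :=
  if odd k then xb x beta k./2 else yb x beta k./2.

(* Nodal values on the enriched mesh of the element of V_h identified with the
   DG dofs (L, Rt):  v(y_0) = v(a) = 0, v(x_i) = L i = v(x_i^+),
   v(y_{i+1}) = Rt i = v(x_{i+1}^-), v(x_{N+1}) = v(b) = 0. *)
Definition wval (N : nat) (L Rt : nat -> R) (k : nat) : R :=
  if (k == 0%N) || (k == (N.*2).+3) then 0
  else if odd k then L k./2 else Rt (k./2).-1.

Definition fe_fun (x : nat -> R) (N : nat) (beta : R) (L Rt : nat -> R) : R -> R :=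
  pw_lin (zb x beta) (N.*2).+3 (wval N L Rt) (fun k => wval N L Rt k.+1).
Definition fe_deriv (x : nat -> R) (N : nat) (beta : R) (L Rt : nat -> R) : R -> R :=
  pw_slope (zb x beta) (N.*2).+3 (wval N L Rt) (fun k => wval N L Rt k.+1).

Definition coefD (x : nat -> R) (N : nat) (D beta : R) (t : R) : R :=
  if `[< exists i : 'I_N.+2, yb x beta i <= t < xb x beta i >] then beta * D else 1.

Definition fe_a (x : nat -> R) (N : nat) (D : R) (beta : R) (uL uR vL vR : nat -> R) : R :=
  \int[lebesgue_measure]_(t in `[x 0%N, x N.+1])
     (coefD x N D beta t * fe_deriv x N beta uL uR t * fe_deriv x N beta vL vR t).

Definition fe_l (x : nat -> R) (N : nat) (f : R -> R) (beta : R) (vL vR : nat -> R) : R :=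
  \int[lebesgue_measure]_(t in `[x 0%N, x N.+1]) (f t * fe_fun x N beta vL vR t).

End Defs.

(* Main.v *)
Require Import Defs.
From HB Require Import structures.
From mathcomp Require Import all_boot all_order all_algebra.
From mathcomp Require Import all_classical all_reals all_analysis.
Import Order.TTheory GRing.Theory Num.Theory.
Import numFieldNormedType.Exports.
Local Open Scope classical_set_scope.
Local Open Scope ring_scope.

From mathcomp Require Import zify ring lra.
Set Implicit Arguments. Unset Strict Implicit. Unset Printing Implicit Defensive.

Section A.
Variable R : realType.
Notation mu := (@lebesgue_measure R).
Implicit Types (p : nat -> R).

Definition incr p M := forall k, (k < M)%N -> p k < p k.+1.

Lemma incr_le p M a b : incr p M -> (a <= b)%N -> (b <= M)%N -> p a <= p b.
Proof.
move=> hp ab bM; elim: b ab bM => [|b IH]; first by rewrite leqn0 => /eqP ->.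
rewrite leq_eqVlt => /orP[/eqP -> //|ab] bM.
apply: le_trans (IH ab (ltnW bM)) _; exact/ltW/hp.
Qed.

Lemma cell_sum p M (F : nat -> R) j t : incr p M -> (j < M)%N ->
  p j <= t < p j.+1 ->
  \sum_(k < M) (if (p k <= t < p k.+1) then F k else 0) = F j.
Proof.
move=> hp jM /andP[h1 h2].
rewrite (bigD1 (Ordinal jM)) //= h1 h2 /= big1 ?addr0 // => k /eqP kj.
have [kj'|kj'] := ltnP k j.
  have : p k.+1 <= p j by apply: incr_le hp _ _; [|exact: ltnW].
  by move=> h; rewrite (ltNge t) (le_trans h h1) andbF.
have kj2 : (j < k)%N.
  by rewrite ltn_neqAle kj' andbT; apply/eqP => e; apply: kj; apply: val_inj.
have : p j.+1 <= p k by apply: incr_le hp _ _ => //; exact: ltnW.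
by move=> h; rewrite (leNgt (p k)) (lt_le_trans h2 h).
Qed.

Lemma cell_sum0 p M (F : nat -> R) t : incr p M -> (t < p 0%N \/ p M <= t) ->
  \sum_(k < M) (if (p k <= t < p k.+1) then F k else 0) = 0.
Proof.
move=> hp ht; rewrite big1 // => k _.
case: ht => ht.
  have : p 0%N <= p k by apply: incr_le hp _ _ => //; exact: ltnW.
  by move=> h; rewrite (leNgt (p k)) (lt_le_trans ht h).
have : p k.+1 <= p M by apply: incr_le hp _ _.
by move=> h; rewrite (ltNge t) (le_trans h ht) andbF.
Qed.

Lemma cell_exists p M t : incr p M -> p 0%N <= t < p M ->
  exists2 j, (j < M)%N & p j <= t < p j.+1.
Proof.
move=> hp; elim: M hp => [|M IH] hp /andP[h1 h2].
  by move: (le_lt_trans h1 h2); rewrite ltxx.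
have [tM|tM] := ltP t (p M).
  have hp' : incr p M by move=> k kM; apply: hp; exact: ltnW.
  have [|j jM hj] := IH hp'; first by rewrite h1 tM.
  by exists j => //; exact: ltnW.
by exists M => //; rewrite tM.
Qed.
End A.

Section B.
Variable R : realType.
Notation mu := (@lebesgue_measure R).
Implicit Types (p : nat -> R).

Lemma step_meas p M (c : nat -> R) :
  measurable_fun setT (fun t => \sum_(k < M) (if (p k <= t < p k.+1) then c k else 0)).
Proof.
apply: measurable_sum => k; apply: measurable_fun_ifT => //.
apply: measurable_and.
  exact: measurable_realfun.measurable_fun_ler.
exact: measurable_realfun.measurable_fun_ltr.
Qed.

Lemma sum_abs_ge (M : nat) (c : nat -> R) j : (j < M)%N -> `|c j| <= \sum_(k < M) `|c k|.
Proof.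
move=> jM; rewrite (bigD1 (Ordinal jM)) //= lerDl; apply: sumr_ge0 => k _; exact: normr_ge0.
Qed.

Lemma step_integrable p M g (c : nat -> R) : incr p M ->
  (forall k t, (k < M)%N -> p k <= t < p k.+1 -> g t = c k) ->
  mu.-integrable `[p 0%N, p M] (EFin \o g).
Proof.
move=> hp hg; apply: measurable_bounded_integrable => //.
- have := lebesgue_measure_itv `[p 0%N, p M]; rewrite /= => ->.
  case: ifP => _ //; exact: ltry.
- apply/measurable_realfun.measurable_fun_itv_bndo_bndcP.
  apply: (@eq_measurable_fun _ _ _ _ _ (fun t => \sum_(k < M) (if (p k <= t < p k.+1) then c k else 0))).
    move=> t; rewrite inE /= in_itv /= => ht.
    have [j jM hj] := cell_exists hp ht.
    by rewrite (cell_sum _ hp jM hj) (hg _ _ jM hj).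
  exact: measurable_funS (step_meas p M c).
- exists (\sum_(k < M) `|c k| + `|g (p M)|); split; first exact: num_real.
  move=> r Br t; rewrite /= in_itv /= => /andP[h1 h2].
  apply: ltW; apply: le_lt_trans Br.
  have [tM|tM] := ltP t (p M).
    have [j jM hj] : exists2 j, (j < M)%N & p j <= t < p j.+1.
      by apply: cell_exists hp _; rewrite h1 tM.
    rewrite (hg _ _ jM hj); apply: le_trans (sum_abs_ge c jM) _.
    by rewrite lerDl.
  have -> : t = p M by apply/eqP; rewrite eq_le h2 tM.
  by rewrite lerDr sumr_ge0 // => k _.
Qed.

Lemma step_int p M g (c : nat -> R) : incr p M ->
  (forall k t, (k < M)%N -> p k <= t < p k.+1 -> g t = c k) ->
  \int[mu]_(t in `[p 0%N, p M]) g t = \sum_(k < M) c k * (p k.+1 - p k).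
Proof.
elim: M => [|M IH] hp hg.
  by rewrite big_ord0 set_itv1 Rintegral_set1.
have hp' : incr p M by move=> k kM; apply: hp; exact: ltnW.
have hg' : forall k t, (k < M)%N -> p k <= t < p k.+1 -> g t = c k.
  by move=> k t kM; apply: hg; exact: ltnW.
have ig := step_integrable hp hg.
have h0M : p 0%N <= p M by apply: incr_le hp' _ _.
have hMM : p M < p M.+1 by apply: hp.
have := Rintegral_itvB (x := p M) ig.
rewrite !bnd_simp => /(_ h0M (ltW hMM)) => e.
have e2 : \int[mu]_(x in `]p M, p M.+1]) g x = c M * (p M.+1 - p M).
  rewrite -Rintegral_itv_bndo_bndc; last first.
    apply: integrableS ig => //; apply: subset_itvScc.
      by rewrite bnd_simp.
    by rewrite bnd_simp.
  rewrite (@eq_Rintegral _ _ _ _ _ (fun _ => c M)); last first.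
    move=> t; rewrite inE /= in_itv /= => /andP[h1 h2].
    by apply: hg => //; rewrite h2 ltW.
  rewrite Rintegral_cst //.
  have := lebesgue_measure_itv `]p M, p M.+1[; rewrite /= => ->.
  by rewrite lte_fin hMM /=.
rewrite big_ord_recr /= -(IH hp' hg') -e2 -e; lra.
Qed.
End B.

Section C.
Variable R : realType.
Notation mu := (@lebesgue_measure R).

Lemma step_int1 (a b c : R) g : a < b -> (forall t, a <= t < b -> g t = c) ->
  \int[mu]_(t in `[a, b]) g t = c * (b - a).
Proof.
move=> ab hg.
have := @step_int R (fun k => if k == 0%N then a else b) 1 g (fun _ => c).
rewrite big_ord1 /=; apply.
  by move=> k; rewrite ltnS leqn0 => /eqP ->.
by move=> k t; rewrite ltnS leqn0 => /eqP -> /=; exact: hg.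
Qed.

Definition slope (x L Rt : nat -> R) i := (Rt i - L i) / (x i.+1 - x i).

Lemma incr_x (x : nat -> R) N : (forall i, (i <= N)%N -> x i < x i.+1) -> incr x N.+1.
Proof. by move=> hx k; rewrite ltnS; exact: hx. Qed.

Lemma dg_deriv_cell x N L Rt i t : (forall i, (i <= N)%N -> x i < x i.+1) ->
  (i <= N)%N -> x i <= t < x i.+1 -> dg_deriv x N L Rt t = slope x L Rt i.
Proof.
move=> hx iN ht.
exact: (@cell_sum _ x N.+1 (fun k => (Rt k - L k) / (x k.+1 - x k)) i t (incr_x hx) iN ht).
Qed.

Lemma dg_a_eq x N D uL uR vL vR : (forall i, (i <= N)%N -> x i < x i.+1) ->
  dg_a x N D uL uR vL vR =
  \sum_(i < N.+1) slope x uL uR i * slope x vL vR i * (x i.+1 - x i)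
  + D * \sum_(i < N.+2) (jump N uL uR i * jump N vL vR i).
Proof.
move=> hx; rewrite /dg_a; congr (_ + _); apply: eq_bigr => i _.
have iN : (i <= N)%N by have := ltn_ord i; rewrite ltnS.
apply: step_int1; first exact: hx.
by move=> t ht; rewrite !(@dg_deriv_cell x N _ _ i t hx iN ht).
Qed.

Lemma zb_even (x : nat -> R) (b : R) i : zb x b i.*2 = yb x b i.
Proof. by rewrite /zb odd_double half_double. Qed.
Lemma zb_odd (x : nat -> R) (b : R) i : zb x b i.*2.+1 = xb x b i.
Proof. by rewrite /zb /= odd_double /= uphalf_double. Qed.

Lemma nat_eo k : exists i, k = i.*2 \/ k = i.*2.+1.
Proof.
exists k./2; rewrite -{1 3}(odd_double_half k); case: (odd k); [right|left] => //.
Qed.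

Definition good (x : nat -> R) N (b : R) :=
  0 < b /\ forall i, (i <= N)%N -> 2 * b < x i.+1 - x i.

Lemma incr_zb (x : nat -> R) N b : good x N b -> incr (zb x b) (N.*2).+3.
Proof.
move=> [b0 hb] k hk.
have [i [ek|ek]] := nat_eo k; subst k.
  by rewrite zb_even zb_odd /yb; lra.
rewrite zb_odd -doubleS zb_even /yb /xb /=.
have iN : (i <= N)%N by lia.
have := hb i iN; case: ifP => [/eqP ->|_]; lra.
Qed.

Lemma coefD_cell (x : nat -> R) N D b k t : good x N b -> (k < (N.*2).+3)%N ->
  zb x b k <= t < zb x b k.+1 ->
  Defs.coefD x N D b t = if odd k then 1 else b * D.
Proof.
move=> hg hk ht; have hz := incr_zb hg.
have [i [ek|ek]] := nat_eo k; subst k.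
  rewrite odd_double /Defs.coefD asboolT //.
  have iN : (i < N.+2)%N by lia.
  by exists (Ordinal iN); rewrite /= -zb_even -zb_odd.
rewrite /= odd_double /= /Defs.coefD asboolF // => -[j /andP[h1 h2]].
move: ht; rewrite zb_odd -doubleS zb_even => /andP[h3 h4].
have jN : (j < N.+2)%N by [].
have [ji|ij] := leqP j i.
  have : xb x b j <= xb x b i.
    rewrite -!zb_odd; apply: incr_le hz _ _; lia.
  lra.
have : yb x b i.+1 <= yb x b j.
  rewrite -!zb_even; apply: incr_le hz _ _; lia.
lra.
Qed.
End C.

Section E1.
Variable R : realType.
Notation mu := (@lebesgue_measure R).

Lemma wval_even N (L Rt : nat -> R) i : (i <= N.+1)%N ->
  wval N L Rt i.*2.+1 - wval N L Rt i.*2 = jump N L Rt i.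
Proof.
move=> iN; rewrite /wval /jump.
have [->|i0] := eqVneq i 0%N.
  by rewrite /= subr0.
have [->|iN1] := eqVneq i N.+1.
  have -> : ((N.+1).*2.+1 == 0)%N || ((N.+1).*2.+1 == N.*2.+3)%N by lia.
  have -> : ((N.+1).*2 == 0)%N || ((N.+1).*2 == N.*2.+3)%N = false by lia.
  by rewrite odd_double /= sub0r half_double.
have -> : (i.*2.+1 == 0)%N || (i.*2.+1 == N.*2.+3)%N = false by lia.
have -> : (i.*2 == 0)%N || (i.*2 == N.*2.+3)%N = false by lia.
rewrite /= odd_double /= uphalf_double half_double.
by [].

Qed.

Lemma wval_odd N (L Rt : nat -> R) i : (i <= N)%N ->
  wval N L Rt i.*2.+2 - wval N L Rt i.*2.+1 = Rt i - L i.
Proof.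
move=> iN; rewrite /wval.
have -> : (i.*2.+2 == 0)%N || (i.*2.+2 == N.*2.+3)%N = false by lia.
have -> : (i.*2.+1 == 0)%N || (i.*2.+1 == N.*2.+3)%N = false by lia.
by rewrite /= odd_double /= uphalf_double half_double.
Qed.

Lemma sum_eo (F : nat -> R) n :
  \sum_(k < (n.*2).+1) F k = \sum_(i < n.+1) F i.*2 + \sum_(i < n) F i.*2.+1.
Proof.
elim: n => [|n IH]; first by rewrite !big_ord1 big_ord0 addr0.
rewrite doubleS (big_ord_recr n.*2.+2) /= (big_ord_recr n.*2.+1) /= IH.
rewrite (big_ord_recr n.+1) (big_ord_recr n (fun i => F i.*2.+1)) /= -doubleS; lra.
Qed.
End E1.
Section E2.
Variable R : realType.
Notation mu := (@lebesgue_measure R).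

Definition ell (x : nat -> R) b i := yb x b i.+1 - xb x b i.

Lemma fe_a_eq (x : nat -> R) N D b uL uR vL vR : good x N b ->
  fe_a x N D b uL uR vL vR =
  D * \sum_(i < N.+2) (jump N uL uR i * jump N vL vR i)
  + \sum_(i < N.+1) ((uR i - uL i) / ell x b i) * ((vR i - vL i) / ell x b i) * ell x b i.
Proof.
move=> hg; have hz := incr_zb hg.
have b0 : b != 0 by case: hg => h _; rewrite gt_eqF.
have e0 : x 0%N = zb x b 0 by rewrite /zb /yb /xb /=; lra.
have eN : x N.+1 = zb x b (N.*2).+3.
  by rewrite -[(N.*2).+3]/((N.+1).*2.+1) zb_odd.
pose c k := (if odd k then 1 else b * D) *
  ((wval N uL uR k.+1 - wval N uL uR k) / (zb x b k.+1 - zb x b k)) *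
  ((wval N vL vR k.+1 - wval N vL vR k) / (zb x b k.+1 - zb x b k)).
rewrite /fe_a e0 eN (@step_int _ (zb x b) (N.*2).+3 _ c hz); last first.
  move=> k t hk ht.
  have fu : fe_deriv x N b uL uR t = (wval N uL uR k.+1 - wval N uL uR k) / (zb x b k.+1 - zb x b k) :=
    @cell_sum _ (zb x b) _ (fun k => (wval N uL uR k.+1 - wval N uL uR k) / (zb x b k.+1 - zb x b k)) k t hz hk ht.
  have fv : fe_deriv x N b vL vR t = (wval N vL vR k.+1 - wval N vL vR k) / (zb x b k.+1 - zb x b k) :=
    @cell_sum _ (zb x b) _ (fun k => (wval N vL vR k.+1 - wval N vL vR k) / (zb x b k.+1 - zb x b k)) k t hz hk ht.
  by rewrite (coefD_cell D hg hk ht) fu fv.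
apply: etrans; first exact: (sum_eo (fun k => c k * (zb x b k.+1 - zb x b k)) N.+1).
congr (_ + _).
  rewrite big_distrr; apply: eq_bigr => i _.
  have iN : (i <= N.+1)%N by have := ltn_ord i; rewrite ltnS.
  rewrite /c odd_double zb_odd zb_even !wval_even // /yb.
  have eb : forall y : R, y - (y - b) = b by move=> y; lra.
  rewrite eb /=; by field.
apply: eq_bigr => i _.
have iN : (i <= N)%N by have := ltn_ord i; rewrite ltnS.
rewrite /c /= odd_double /= !wval_odd // -doubleS zb_even zb_odd mul1r.
by [].
Qed.
End E2.

Section P1.
Variable R : realType.
Notation mu := (@lebesgue_measure R).

Lemma cvg_affine (g k : R) : (fun b : R => g - k * b) @ 0^'+ --> g.
Proof.
apply: cvg_at_right_filter.
have : (fun b : R => g - k * b) @ (0:R) --> g - k * 0.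
  apply: cvgB; first exact: cvg_cst.
  apply: cvgM; first exact: cvg_cst.
  exact: cvg_id.
by rewrite mulr0 subr0.
Qed.

Lemma cvg_term (f : R -> R) (a a' l : R) : l != 0 -> f @ 0^'+ --> l ->
  (fun b => (a / f b) * (a' / f b) * f b) @ 0^'+ --> (a / l) * (a' / l) * l.
Proof.
move=> l0 hf.
have hV : forall c, (fun b => c / f b) @ 0^'+ --> c / l.
  by move=> c; apply: cvgM; [exact: cvg_cst| exact: cvgV].
exact: (cvgM (cvgM (hV a) (hV a')) hf).
Qed.

Lemma cvg_sum_nat (F : set_system R) {FF : Filter F} n (f : nat -> R -> R) (a : nat -> R) :
  (forall i, (i < n)%N -> f i @ F --> a i) ->
  (fun b => \sum_(i < n) f i b) @ F --> \sum_(i < n) a i.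
Proof.
elim: n => [|n IH] h.
  have -> : (fun b => \sum_(i < 0) f i b) = fun _ => 0.
    by apply/funext => b; rewrite big_ord0.
  rewrite big_ord0; exact: cvg_cst.
have -> : (fun b => \sum_(i < n.+1) f i b) = fun b => \sum_(i < n) f i b + f n b.
  by apply/funext => b; rewrite big_ord_recr.
rewrite big_ord_recr /=; apply: cvgD.
  by apply: IH => i ii; apply: h; exact: ltnW.
exact: h.
Qed.

Lemma ell_cvg (x : nat -> R) i : (fun b => ell x b i) @ 0^'+ --> x i.+1 - x i.
Proof.
have -> : (fun b => ell x b i) = fun b => (x i.+1 - x i) - (if i == 0%N then 2 else 1) * b.
  apply/funext => b; rewrite /ell /yb /xb /=.
  by case: (i == 0%N) / eqP => [->|_]; lra.
exact: cvg_affine.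
Qed.

Lemma near_good (x : nat -> R) N : (forall i, (i <= N)%N -> x i < x i.+1) ->
  \forall b \near 0^'+, good x N b.
Proof.
move=> hx.
have single : forall i, \forall b \near (0:R)^'+, (i <= N)%N -> 2 * b < x i.+1 - x i.
  move=> i; have [iN|iN] := boolP (i <= N)%N.
    have g0 : 0 < (x i.+1 - x i) / 2 by have := hx i iN; lra.
    apply: filterS (nbhs_right_lt g0) => b hb _; lra.
  by apply: nearW.
have H : forall n, \forall b \near (0:R)^'+, forall i, (i <= n)%N -> (i <= N)%N -> 2 * b < x i.+1 - x i.
  elim => [|n IH].
    apply: filterS (single 0%N) => b hb i; rewrite leqn0 => /eqP ->; exact: hb.
  apply: filterS2 IH (single n.+1) => b h1 h2 i; rewrite leq_eqVlt => /orP[/eqP ->|]; first exact: h2.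
  by rewrite ltnS; exact: h1.
apply: filterS2 (nbhs_right_gt 0) (H N) => b h1 h2; split => // i iN; exact: h2.
Qed.

Lemma part1 (x : nat -> R) N D uL uR vL vR : (forall i, (i <= N)%N -> x i < x i.+1) ->
  fe_a x N D b uL uR vL vR @[b --> 0^'+] --> dg_a x N D uL uR vL vR.
Proof.
move=> hx; rewrite dg_a_eq // addrC.
have hG : (fun b => D * \sum_(i < N.+2) (jump N uL uR i * jump N vL vR i)
  + \sum_(i < N.+1) ((uR i - uL i) / ell x b i) * ((vR i - vL i) / ell x b i) * ell x b i)
  @ 0^'+ --> D * \sum_(i < N.+2) (jump N uL uR i * jump N vL vR i)
  + \sum_(i < N.+1) slope x uL uR i * slope x vL vR i * (x i.+1 - x i).
  apply: cvgD; first exact: cvg_cst.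
  apply: (@cvg_sum_nat (0:R)^'+ _ N.+1 (fun i b => ((uR i - uL i) / ell x b i) * ((vR i - vL i) / ell x b i) * ell x b i) (fun i => slope x uL uR i * slope x vL vR i * (x i.+1 - x i))) => i iN.
  apply: cvg_term; last exact: ell_cvg.
  have := hx i; rewrite -ltnS => /(_ iN); rewrite -subr_gt0 => h; exact: lt0r_neq0.
apply: (cvg_trans _ hG); apply: near_eq_cvg.
near=> b; rewrite fe_a_eq //.
near: b; exact: near_good.
Unshelve. all: by end_near.
Qed.
End P1.

Section P2a.
Variable R : realType.
Notation mu := (@lebesgue_measure R).

Lemma meas_lin (p q l r : R) : measurable_fun setT (lin p q l r).
Proof.
rewrite /lin.
apply: measurable_realfun.measurable_funD; first exact: measurable_cst.
apply: measurable_realfun.measurable_funM; last exact: measurable_cst.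
apply: measurable_realfun.measurable_funM; first exact: measurable_cst.
apply: measurable_realfun.measurable_funB; first exact: measurable_id.
exact: measurable_cst.
Qed.

Lemma meas_pw_lin (p : nat -> R) M l r : measurable_fun setT (pw_lin p M l r).
Proof.
rewrite /pw_lin; apply: measurable_sum => k; apply: measurable_fun_ifT.
- apply: measurable_and.
    exact: measurable_realfun.measurable_fun_ler.
  exact: measurable_realfun.measurable_fun_ltr.
- exact: meas_lin.
- exact: measurable_cst.
Qed.

Lemma lin_bound (p q l r t : R) : p <= t < q -> `|lin p q l r t| <= 2 * (`|l| + `|r|).
Proof.
move=> /andP[h1 h2]; rewrite /lin.
have qp : 0 < q - p by lra.
have s0 : 0 <= (t - p) / (q - p) by apply: divr_ge0; lra.
have s1 : (t - p) / (q - p) <= 1 by rewrite ler_pdivrMr // mul1r; lra.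
rewrite -mulrA; apply: le_trans (ler_normD _ _) _.
rewrite normrM (ger0_norm s0).
have : `|r - l| <= `|r| + `|l| by rewrite -(normrN l); exact: ler_normD.
have := normr_ge0 l; have := normr_ge0 r; have := normr_ge0 (r - l).
nra.
Qed.

Lemma pw_bound (p : nat -> R) M l r t :
  `|pw_lin p M l r t| <= \sum_(k < M) 2 * (`|l k| + `|r k|).
Proof.
rewrite /pw_lin; apply: le_trans (ler_norm_sum _ _ _) _.
apply: ler_sum => k _; case: ifP => h.
  exact: lin_bound.
rewrite normr0; apply: mulr_ge0 => //; apply: addr_ge0; exact: normr_ge0.
Qed.
End P2a.

Section P2b.
Variable R : realType.
Notation mu := (@lebesgue_measure R).

Lemma wval_L N (L Rt : nat -> R) i : (i <= N)%N -> wval N L Rt i.*2.+1 = L i.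
Proof.
move=> iN; rewrite /wval.
have -> : (i.*2.+1 == 0)%N || (i.*2.+1 == N.*2.+3)%N = false by lia.
by rewrite /= odd_double /= uphalf_double.
Qed.

Lemma wval_R N (L Rt : nat -> R) i : (i <= N)%N -> wval N L Rt i.*2.+2 = Rt i.
Proof.
move=> iN; rewrite /wval.
have -> : (i.*2.+2 == 0)%N || (i.*2.+2 == N.*2.+3)%N = false by lia.
by rewrite /= odd_double /= half_double.
Qed.

Lemma fe_fun_cell (x : nat -> R) N b L Rt i t : good x N b -> (i <= N)%N ->
  xb x b i <= t < yb x b i.+1 ->
  fe_fun x N b L Rt t = lin (xb x b i) (yb x b i.+1) (L i) (Rt i) t.
Proof.
move=> hg iN ht; have hz := incr_zb hg.
have hk : (i.*2.+1 < N.*2.+3)%N by lia.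
have ht' : zb x b i.*2.+1 <= t < zb x b i.*2.+1.+1 by rewrite zb_odd -doubleS zb_even.
have := @cell_sum _ (zb x b) _ (fun k => lin (zb x b k) (zb x b k.+1) (wval N L Rt k) (wval N L Rt k.+1) t) _ t hz hk ht'.
rewrite wval_L // wval_R // zb_odd -(doubleS i) zb_even => <-.
by [].
Qed.

Lemma dg_fun_cell (x : nat -> R) N L Rt i t : (forall i, (i <= N)%N -> x i < x i.+1) ->
  (i <= N)%N -> x i <= t < x i.+1 ->
  dg_fun x N L Rt t = lin (x i) (x i.+1) (L i) (Rt i) t.
Proof.
move=> hx iN ht.
exact: (@cell_sum _ x N.+1 (fun k => lin (x k) (x k.+1) (L k) (Rt k) t) i t (incr_x hx) iN ht).
Qed.

Lemma in_cell_b (x : nat -> R) i b t : 0 < b -> b < t - x 0%N -> b < x i.+1 - t ->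
  x i <= t -> xb x b i <= t < yb x b i.+1.
Proof.
move=> b0 h1 h2 h3; rewrite /yb /xb /=.
case: (i == 0%N) / eqP => [e|_]; apply/andP; split; lra.
Qed.

Lemma fe_fun_cvg (x : nat -> R) N L Rt t : (forall i, (i <= N)%N -> x i < x i.+1) ->
  x 0%N < t < x N.+1 ->
  fe_fun x N b L Rt t @[b --> 0^'+] --> dg_fun x N L Rt t.
Proof.
move=> hx /andP[t0 tN].
have [i iN hi] : exists2 i, (i < N.+1)%N & x i <= t < x i.+1.
  by apply: cell_exists (incr_x hx) _; rewrite (ltW t0) tN.
have iN' : (i <= N)%N by rewrite -ltnS.
rewrite (dg_fun_cell _ _ hx iN' hi).
have hxb : (fun b => xb x b i) @ 0^'+ --> x i.
  have -> : (fun b => xb x b i) = fun b => x i - (if i == 0%N then -1 else 0) * b.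
    apply/funext => b; rewrite /xb; case: (i == 0%N) / eqP => [->|_]; lra.
  exact: cvg_affine.
have hyb : (fun b => yb x b i.+1) @ 0^'+ --> x i.+1.
  have -> : (fun b => yb x b i.+1) = fun b => x i.+1 - 1 * b.
    by apply/funext => b; rewrite /yb /xb /=; lra.
  exact: cvg_affine.
have hgap : x i.+1 - x i != 0 by have := hx i iN'; rewrite -subr_gt0 => h; exact: lt0r_neq0.
have hlim : lin (xb x b i) (yb x b i.+1) (L i) (Rt i) t @[b --> 0^'+] -->
            lin (x i) (x i.+1) (L i) (Rt i) t.
  rewrite /lin; apply: cvgD; first exact: cvg_cst.
  apply: cvgM.
    apply: cvgM; first exact: cvg_cst.
    apply: cvgB; first exact: cvg_cst.
    exact: hxb.
  apply: cvgV => //; exact: cvgB.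
apply: (cvg_trans _ hlim); apply: near_eq_cvg.
near=> b.
have hg : good x N b by near: b; exact: near_good.
have ht : xb x b i <= t < yb x b i.+1.
  have h1 : b < t - x 0%N by near: b; apply: nbhs_right_lt; lra.
  have h2 : b < x i.+1 - t by near: b; apply: nbhs_right_lt; lra.
  have b0 : 0 < b by near: b; exact: nbhs_right_gt.
  have /andP[hi1 hi2] := hi.
  exact: in_cell_b.
by rewrite (@fe_fun_cell x N b L Rt i t hg iN' ht).
Unshelve. all: by end_near.
Qed.
End P2b.

Section P2c.
Variable R : realType.
Notation mu := (@lebesgue_measure R).

Lemma Rint_cc_oo (a c : R) (h : R -> R) : measurable_fun `[a, c] h ->
  \int[mu]_(t in `[a, c]) h t = fine (\int[mu]_(t in `]a, c[) (h t)%:E)%E.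
Proof.
move=> mh; rewrite /Rintegral; congr fine.
rewrite -integral_itv_bndo_bndc; last first.
  apply/measurable_realfun.measurable_EFinP; apply: measurable_funS mh => //.
  exact: subset_itv_co_cc.
rewrite -integral_itv_obnd_cbnd //.
apply/measurable_realfun.measurable_EFinP; apply: measurable_funS mh => //.
exact: subset_itv_oo_cc.
Qed.

Lemma part2 (x : nat -> R) N (f : R -> R) vL vR : (forall i, (i <= N)%N -> x i < x i.+1) ->
  mu.-integrable `[x 0%N, x N.+1] (EFin \o f) ->
  fe_l x N f b vL vR @[b --> 0^'+] --> dg_l x N f vL vR.
Proof.
move=> hx hf.
have mf : measurable_fun `[x 0%N, x N.+1] f.
  apply/measurable_realfun.measurable_EFinP; exact: (measurable_int _ hf).
have mfo : measurable_fun `]x 0%N, x N.+1[ f.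
  apply: measurable_funS mf => //; exact: subset_itv_oo_cc.
have mprod : forall g : R -> R, measurable_fun setT g ->
    measurable_fun `[x 0%N, x N.+1] (fun t => f t * g t).
  move=> g mg; apply: measurable_realfun.measurable_funM => //.
  exact: measurable_funS mg.
pose C := \sum_(k < (N.*2).+3) 2 * (`|wval N vL vR k| + `|wval N vL vR k.+1|).
pose g := fun t => (C * `|f t|)%:E.
have ig : mu.-integrable `]x 0%N, x N.+1[ g.
  have h1 : mu.-integrable `]x 0%N, x N.+1[ (EFin \o f).
    apply: integrableS hf => //; exact: subset_itv_oo_cc.
  have h2 : mu.-integrable `]x 0%N, x N.+1[ (fun t => C%:E * (EFin \o (Num.Def.normr \o f)) t)%E.
    by apply: integrableZl => //; exact: integrable_norm.
  apply: eq_integrable h2 => // t _ /=; by rewrite EFinM.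
apply/cvg_at_rightP => u [u0 uc].
rewrite /dg_l Rint_cc_oo; last by apply: mprod; exact: meas_pw_lin.
have -> : (fun n => fe_l x N f (u n) vL vR) =
    (fun n => fine (\int[mu]_(t in `]x 0%N, x N.+1[) (f t * fe_fun x N (u n) vL vR t)%:E)%E).
  by apply/funext => n; rewrite /fe_l Rint_cc_oo //; by apply: mprod; exact: meas_pw_lin.
set I := (\int[mu]_(t in `]x 0%N, x N.+1[) (f t * dg_fun x N vL vR t)%:E)%E.
have DCT : (\int[mu]_(t in `]x 0%N, x N.+1[) (f t * fe_fun x N (u n) vL vR t)%:E)%E @[n --> \oo] --> I.
  apply: (@dominated_cvg _ _ _ mu _ _
            (fun n t => (f t * fe_fun x N (u n) vL vR t)%:E)
            (fun t => (f t * dg_fun x N vL vR t)%:E) g) => //.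
  - move=> n; apply/measurable_realfun.measurable_EFinP.
    apply: measurable_realfun.measurable_funM => //.
    exact: measurable_funS (meas_pw_lin _ _ _ _).
  - move=> t; rewrite /= in_itv /= => ht.
    apply: cvg_EFin; first by apply: nearW.
    have h1 := (cvg_at_rightP _ _ _).1 (@fe_fun_cvg R x N vL vR t hx ht) u (conj u0 uc).
    have h2 : (fun n => f t * fe_fun x N (u n) vL vR t) @ \oo --> f t * dg_fun x N vL vR t.
      apply: cvgM; first exact: cvg_cst.
      exact: h1.
    exact: h2.
  - move=> n t _; rewrite /g /= lee_fin normrM mulrC.
    apply: ler_wpM2r; first exact: normr_ge0.
    exact: pw_bound.
have Ifin : I \is a fin_num.
  apply: integrable_fin_num => //.
  have h1 : mu.-integrable `]x 0%N, x N.+1[ (EFin \o f).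
    apply: integrableS hf => //; exact: subset_itv_oo_cc.
  have h3 : mu.-integrable `]x 0%N, x N.+1[ ((EFin \o f) \* (EFin \o dg_fun x N vL vR))%E.
    apply: integrableMl => //.
      exact: measurable_funS (meas_pw_lin _ _ _ _).
    exists (\sum_(k < N.+1) 2 * (`|vL k| + `|vR k|)); split; first exact: num_real.
    move=> r hr t _; apply: ltW; apply: le_lt_trans hr.
    exact: pw_bound.
  apply: eq_integrable h3 => // t _ /=; by rewrite EFinM.
rewrite -(fineK Ifin) in DCT.
exact: (fine_cvg DCT).
Qed.
End P2c.

Unset Implicit Arguments.

Theorem theorem2p1 (R : realType) (N : nat) (x : nat -> R) (D : R) (f : R -> R)
  (hx : forall i : nat, (i <= N)%N -> x i < x i.+1)
  (hD : 0 < D)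
  (hf : lebesgue_measure.-integrable `[x 0%N, x N.+1] (EFin \o f)) :
  (forall uL uR vL vR : nat -> R,
      fe_a x N D beta uL uR vL vR @[beta --> 0^'+] --> dg_a x N D uL uR vL vR)
  /\ (forall vL vR : nat -> R,
      fe_l x N f beta vL vR @[beta --> 0^'+] --> dg_l x N f vL vR)
  /\ (forall uL uR : nat -> R,
      (forall vL vR : nat -> R,
          (fe_a x N D beta uL uR vL vR - fe_l x N f beta vL vR) @[beta --> 0^'+] --> 0)
      <-> dg_solution x N D f uL uR).
Proof.
have P1 : forall uL uR vL vR : nat -> R,
    fe_a x N D beta uL uR vL vR @[beta --> 0^'+] --> dg_a x N D uL uR vL vR.
  by move=> uL uR vL vR; exact: part1.
have P2 : forall vL vR : nat -> R,
    fe_l x N f beta vL vR @[beta --> 0^'+] --> dg_l x N f vL vR.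
  by move=> vL vR; exact: part2.
split => //; split => // uL uR.
have H : forall vL vR, (fe_a x N D beta uL uR vL vR - fe_l x N f beta vL vR) @[beta --> 0^'+]
    --> dg_a x N D uL uR vL vR - dg_l x N f vL vR.
  by move=> vL vR; apply: cvgB; [exact: P1|exact: P2].
split.
  move=> h vL vR; apply/eqP; rewrite -subr_eq0; apply/eqP.
  exact: (cvg_unique _ (H vL vR) (h vL vR)).
move=> hs vL vR; have := H vL vR; by rewrite hs subrr.
Qed.
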